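(* In the setting described in the context, assume that the maximal edge length is sufficiently small and that the coefficients $C_{\vec n}$ and $C_{\vec m}$ are constant on each edge. Then for all $(\vec\lambda,\vec\phi)\in V_{\vec\lambda}\times V_{\vec\lambda}$, \[ L(\vec\lambda,\vec\lambda)+L(\vec\phi,\vec\phi)\lesssim A((\vec\lambda,\vec\phi),(\vec\lambda,\vec\phi))\lesssim L(\vec\lambda,\vec\lambda)+L(\vec\phi,\vec\phi), \] where the hidden constants depend only on the reciprocal of \[ \lambda_{\min}=\min_{\vec\mu\in V_{\vec\lambda}\setminus\{0\}}\frac{L(\vec\mu,\vec\mu)}{M(\vec\mu,\vec\mu)}. \]
   Context: $\mathcal G=(\mathcal N,\mathcal E)$ is a finite connected graph embedded in $\mathbb R^3$: nodes are distinct points, each edge $\mathfrak e$ is the straight segment joining two distinct nodes $\mathfrak n_k,\mathfrak n_\ell$ ($k<\ell$), with length $h_{\mathfrak e}$, direction $\vec i_{\mathfrak e}=(\mathfrak n_\ell-\mathfrak n_k)/h_{\mathfrak e}$, scalar normals $\nu_{\mathfrak e}(\mathfrak n_k)=-1$, $\nu_{\mathfrak e}(\mathfrak n_\ell)=+1$; $x$ is arclength on $\mathfrak e$ increasing along $\vec i_{\mathfrak e}$, $\partial_x$ its derivative, $\times$ the cross product. $C_{\vec n},C_{\vec m}$ are symmetric $\mathbb R^{3\times3}$-valued coefficients with uniform bounds $\alpha_{\vec n}|\xi|^2\le(C_{\vec n}\xi)\cdot\xi\le\beta_{\vec n}|\xi|^2$, $\alpha_{\vec m}|\xi|^2\le(C_{\vec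 m}\xi)\cdot\xi\le\beta_{\vec m}|\xi|^2$ ($0<\alpha,\beta<\infty$), and for each edge there is a right-handed orthonormal basis $\{\vec i_{\mathfrak e},\vec j_{\mathfrak e},\vec k_{\mathfrak e}\}$ (principal axes of the beam cross section) in which $C_{\vec n}$ and $C_{\vec m}$ are diagonal. $(\vec v,\vec w)_{\mathfrak e}=\int_{\mathfrak e}\vec v\cdot\vec w\,\mathrm d\sigma$; $\langle\vec a,\vec b\rangle_{\mathfrak e}=\sum_{\mathfrak n\text{ endpoint of }\mathfrak e}\vec a(\mathfrak n)\cdot\vec b(\mathfrak n)$, also for nodal quantities. Local solver: for an edge $\mathfrak e$ and nodal data $\vec u_{\mathfrak n},\vec r_{\mathfrak n}\in\mathbb R^3$ at its endpoints, $\vec N_{\mathfrak e}(\vec u_{\mathfrak n},\vec r_{\mathfrak n}),\vec M_{\mathfrak e}(\vec u_{\mathfrak n},\vec r_{\mathfrak n})$ denote the components $\vec n_{\mathfrak e},\vec m_{\mathfrak e}\in(H^1(\mathfrak e))^3$ of the unique $\vec u_{\mathfrak e},\vec r_{\mathfrak e}\in(L^2(\mathfrak e))^3$, $\vec n_{\mathfrak e},\vec m_{\mathfrak e}\in(H^1(\mathfrak e))^3$ with, for all $\vec p,\vec q\in(H^1(\mathfrak e))^3$, $\vec v,\vec w\in(L^2(\mathfrak e))^3$: $-(C_{\vec n}^{-1}\vec n_{\mathfrak e},\vec p)_{\mathfrak e}+(\vec u_{\mathfrak e},\partial_x\vec p)_{\mathfrak e}-(\vec i_{\mathfrak e}\times\vec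 r_{\mathfrak e},\vec p)_{\mathfrak e}=\langle\vec u_{\mathfrak n},\vec p\nu_{\mathfrak e}\rangle_{\mathfrak e}$; $-(C_{\vec m}^{-1}\vec m_{\mathfrak e},\vec q)_{\mathfrak e}+(\vec r_{\mathfrak e},\partial_x\vec q)_{\mathfrak e}=\langle\vec r_{\mathfrak n},\vec q\nu_{\mathfrak e}\rangle_{\mathfrak e}$; $(\partial_x\vec n_{\mathfrak e},\vec v)_{\mathfrak e}=0$; $(\vec i_{\mathfrak e}\times\vec n_{\mathfrak e},\vec w)_{\mathfrak e}+(\partial_x\vec m_{\mathfrak e},\vec w)_{\mathfrak e}=0$. A nonempty set $\mathcal N_{\mathrm D}\subset\mathcal N$ of Dirichlet nodes is fixed and $V_{\vec\lambda}$ is the space of maps $\vec\lambda:\mathcal N\to\mathbb R^3$ with $\vec\lambda_{\mathfrak n}=0$ for $\mathfrak n\in\mathcal N_{\mathrm D}$. With $[\![q_{\mathfrak e}]\!]_{\mathfrak n}=\sum_{\mathfrak e\text{ adjacent to }\mathfrak n}q_{\mathfrak e}(\mathfrak n)$, define $A((\vec\lambda,\vec\phi),(\vec\mu,\vec\psi))=-\sum_{\mathfrak n\in\mathcal N\setminus\mathcal N_{\mathrm D}}\big[[\![\vec N_{\mathfrak e}(\vec\lambda_{\mathfrak n},\vec\phi_{\mathfrak n})\nu_{\mathfrak e}]\!]_{\mathfrak n}\cdot\vec\mu_{\mathfrak n}+[\![\vec M_{\mathfrak e}(\vec\lambda_{\mathfrak n},\vec\phi_{\mathfrak n})\nu_{\mathfrak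 e}]\!]_{\mathfrak n}\cdot\vec\psi_{\mathfrak n}\big]$, where the local solver on $\mathfrak e$ is fed the values of $\vec\lambda,\vec\phi$ at the endpoints of $\mathfrak e$. For $\vec\lambda,\vec\mu\in V_{\vec\lambda}$ define $M(\vec\lambda,\vec\mu)=\sum_{\mathfrak n\in\mathcal N}\frac12\sum_{\mathfrak e\text{ adjacent to }\mathfrak n}h_{\mathfrak e}\,\vec\lambda_{\mathfrak n}\cdot\vec\mu_{\mathfrak n}$ and $L(\vec\lambda,\vec\mu)=\sum_{\mathfrak n\in\mathcal N}\frac12\sum_{\mathfrak e=(\mathfrak n,\mathfrak n')\text{ adjacent to }\mathfrak n}\frac{(\vec\lambda_{\mathfrak n}-\vec\lambda_{\mathfrak n'})\cdot(\vec\mu_{\mathfrak n}-\vec\mu_{\mathfrak n'})}{h_{\mathfrak e}}$. Notation $a\lesssim b$: $a\le Cb$ with $C>0$ possibly depending on the coefficients $C_{\vec n},C_{\vec m}$ but independent of the edge lengths. *)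

(* Defs.v *)
From HB Require Import structures.
From mathcomp Require Import all_boot all_order all_algebra.
From mathcomp Require Import all_classical all_reals all_analysis.
Set Implicit Arguments. Unset Strict Implicit. Unset Printing Implicit Defensive.
Import Order.TTheory GRing.Theory Num.Theory.
Local Open Scope ring_scope.
Local Open Scope classical_set_scope.

Definition dotv {R : nzRingType} (a b : 'rV[R]_3) : R := \sum_(i < 3) a 0 i * b 0 i.

Definition crossv {R : nzRingType} (a b : 'rV[R]_3) : 'rV[R]_3 :=
  let c (v : 'rV[R]_3) (k : nat) := v 0 (inord k) in
  \row_(i < 3) (match val i with
                | O => c a 1%N * c b 2%N - c a 2%N * c b 1%N
                | S O => c a 2%N * c b 0%N - c a 0%N * c b 2%N
                | _ => c a 0%N * c b 1%N - c a 1%N * c b 0%N end).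

Definition normv {R : rcfType} (a : 'rV[R]_3) : R := Num.sqrt (dotv a a).

(* ---------- functions on an edge, parametrized by arclength x in [0,h] ---------- *)
Definition Rint {R : realType} (a b : R) (f : R -> R) : R :=
  Rintegral (@lebesgue_measure R) `[a, b] f.

Definition L2 {R : realType} (h : R) (f : R -> 'rV[R]_3) : Prop :=
  forall i : 'I_3,
    measurable_fun `[0, h] (fun x => f x 0 i) /\
    (@lebesgue_measure R).-integrable `[0, h] (fun x => ((f x 0 i) ^+ 2)%:E).

(* p is (the continuous representative of) an element of (H^1(e))^3 with
   (weak) derivative dp : p x = p 0 + int_0^x dp, dp in L^2. *)
Definition H1d {R : realType} (h : R) (p dp : R -> 'rV[R]_3) : Prop :=
  L2 h dp /\
  forall x, 0 <= x <= h -> forall i : 'I_3, p x 0 i = p 0 0 i + Rint 0 x (fun t => dp t 0 i).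

Definition ipe {R : realType} (h : R) (v w : R -> 'rV[R]_3) : R :=
  \sum_(i < 3) Rint 0 h (fun x => v x 0 i * w x 0 i).

(* Local solver on an edge of length h, direction ie, constant coefficients Cn Cm,
   nodal data (uk, rk) at the first node n_k (x = 0, nu = -1) and (ul, rl) at the
   second node n_l (x = h, nu = +1); unknowns u r in L^2, n m in H^1. *)
Definition local_sol {R : realType} (h : R) (ie : 'rV[R]_3) (Cn Cm : 'M[R]_3)
  (uk ul rk rl : 'rV[R]_3) (u r n m : R -> 'rV[R]_3) : Prop :=
  L2 h u /\ L2 h r /\
  exists dn dm, H1d h n dn /\ H1d h m dm /\
  (forall p dp, H1d h p dp ->
     - ipe h (fun x => n x *m invmx Cn) p + ipe h u dp
     - ipe h (fun x => crossv ie (r x)) p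
     = - dotv uk (p 0) + dotv ul (p h)) /\
  (forall q dq, H1d h q dq ->
     - ipe h (fun x => m x *m invmx Cm) q + ipe h r dq
     = - dotv rk (q 0) + dotv rl (q h)) /\
  (forall v, L2 h v -> ipe h dn v = 0) /\
  (forall w, L2 h w -> ipe h (fun x => crossv ie (n x)) w + ipe h dm w = 0).

Definition adj {nN nE : nat} (ends : 'I_nE -> 'I_nN * 'I_nN) : rel 'I_nN :=
  fun a b => [exists e, (ends e == (a, b)) || (ends e == (b, a))].

Definition graph_ok {R : nzRingType} {nN nE : nat} (pos : 'I_nN -> 'rV[R]_3)
  (ends : 'I_nE -> 'I_nN * 'I_nN) : Prop :=
  injective pos /\ injective ends /\
  (forall e, ((ends e).1 < (ends e).2)%N) /\
  (forall a b, connect (adj ends) a b).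

Definition edge_len {R : rcfType} {nN nE : nat} (pos : 'I_nN -> 'rV[R]_3)
  (ends : 'I_nE -> 'I_nN * 'I_nN) (e : 'I_nE) : R :=
  normv (pos (ends e).2 - pos (ends e).1).

Definition edge_dir {R : rcfType} {nN nE : nat} (pos : 'I_nN -> 'rV[R]_3)
  (ends : 'I_nE -> 'I_nN * 'I_nN) (e : 'I_nE) : 'rV[R]_3 :=
  (edge_len pos ends e)^-1 *: (pos (ends e).2 - pos (ends e).1).

(* symmetric coefficient with bounds a|xi|^2 <= (C xi).xi <= b|xi|^2, diagonal in a
   right-handed orthonormal basis {ie, j, k} *)
Definition coef_ok {R : realType} (a b : R) (ie : 'rV[R]_3) (C : 'M[R]_3) : Prop :=
  C^T = C /\
  (forall xi : 'rV[R]_3, a * dotv xi xi <= dotv (xi *m C) xi <= b * dotv xi xi) /\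
  exists j k : 'rV[R]_3,
    dotv j j = 1 /\ dotv k k = 1 /\ dotv ie j = 0 /\ dotv ie k = 0 /\ dotv j k = 0 /\
    crossv ie j = k /\
    dotv (ie *m C) j = 0 /\ dotv (ie *m C) k = 0 /\ dotv (j *m C) k = 0.

Definition inV {R : nzRingType} {nN : nat} (ND : {set 'I_nN}) (lam : 'I_nN -> 'rV[R]_3) :=
  forall a, a \in ND -> lam a = 0.

Definition Mform {R : rcfType} {nN nE : nat} (pos : 'I_nN -> 'rV[R]_3)
  (ends : 'I_nE -> 'I_nN * 'I_nN) (lam mu : 'I_nN -> 'rV[R]_3) : R :=
  \sum_(a < nN) 2^-1 * \sum_(e < nE | ((ends e).1 == a) || ((ends e).2 == a))
      edge_len pos ends e * dotv (lam a) (mu a).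

Definition other {nN nE : nat} (ends : 'I_nE -> 'I_nN * 'I_nN) (e : 'I_nE) (a : 'I_nN) :=
  if (ends e).1 == a then (ends e).2 else (ends e).1.

Definition Lform {R : rcfType} {nN nE : nat} (pos : 'I_nN -> 'rV[R]_3)
  (ends : 'I_nE -> 'I_nN * 'I_nN) (lam mu : 'I_nN -> 'rV[R]_3) : R :=
  \sum_(a < nN) 2^-1 * \sum_(e < nE | ((ends e).1 == a) || ((ends e).2 == a))
      dotv (lam a - lam (other ends e a)) (mu a - mu (other ends e a))
        / edge_len pos ends e.

(* [[ q_e nu_e ]]_a, given the values q_e(n_k) = f0 e (at x = 0) and q_e(n_l) = fh e *)
Definition jumpn {R : nzRingType} {nN nE : nat} (ends : 'I_nE -> 'I_nN * 'I_nN)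
  (f0 fh : 'I_nE -> 'rV[R]_3) (a : 'I_nN) : 'rV[R]_3 :=
  \sum_(e < nE) ((if (ends e).2 == a then fh e else 0) - (if (ends e).1 == a then f0 e else 0)).

(* A((lam,phi),(mu,psi)) computed from the endpoint values of the local solutions
   N_e(lam,phi), M_e(lam,phi) *)
Definition Aform {R : nzRingType} {nN nE : nat} (ends : 'I_nE -> 'I_nN * 'I_nN)
  (ND : {set 'I_nN}) (N0 Nh M0 Mh : 'I_nE -> 'rV[R]_3) (mu psi : 'I_nN -> 'rV[R]_3) : R :=
  - \sum_(a < nN | a \notin ND)
      (dotv (jumpn ends N0 Nh a) (mu a) + dotv (jumpn ends M0 Mh a) (psi a)).

Definition lam_min {R : realType} {nN nE : nat} (pos : 'I_nN -> 'rV[R]_3)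
  (ends : 'I_nE -> 'I_nN * 'I_nN) (ND : {set 'I_nN}) : R :=
  inf [set Lform pos ends mu mu / Mform pos ends mu mu
      | mu in [set mu | inV ND mu /\ mu <> (fun _ => 0)]].

(* Main.v *)
Require Import Defs.
From HB Require Import structures.
From mathcomp Require Import all_boot all_order all_algebra.
From mathcomp Require Import all_classical all_reals all_analysis.
From mathcomp Require Import ring lra.
From mathcomp Require Import measurable_realfun.
Import Order.TTheory GRing.Theory Num.Theory.
Local Open Scope ring_scope.
Local Open Scope classical_set_scope.
Section VA.
Variable R : realType.
Implicit Types a b c v w x y : 'rV[R]_3.

Definition cmp (v : 'rV[R]_3) (k : nat) : R := v 0 (inord k).

Lemma sum3 (F : 'I_3 -> R) : \sum_(i < 3) F i = F (inord 0) + F (inord 1) + F (inord 2).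
Proof.
rewrite !big_ord_recr big_ord0 /= add0r.
by congr (_ + _ + _); congr F; apply/val_inj; rewrite /= inordK.
Qed.

Lemma dotvE a b : dotv a b = cmp a 0 * cmp b 0 + cmp a 1 * cmp b 1 + cmp a 2 * cmp b 2.
Proof. by rewrite /dotv sum3. Qed.

Lemma crossv0 a b : cmp (crossv a b) 0 = cmp a 1 * cmp b 2 - cmp a 2 * cmp b 1.
Proof. by rewrite /cmp /crossv mxE /= inordK. Qed.
Lemma crossv1 a b : cmp (crossv a b) 1 = cmp a 2 * cmp b 0 - cmp a 0 * cmp b 2.
Proof. by rewrite /cmp /crossv mxE /= inordK. Qed.
Lemma crossv2 a b : cmp (crossv a b) 2 = cmp a 0 * cmp b 1 - cmp a 1 * cmp b 0.
Proof. by rewrite /cmp /crossv mxE /= inordK. Qed.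

Lemma cmpD a b k : cmp (a + b) k = cmp a k + cmp b k.
Proof. by rewrite /cmp mxE. Qed.
Lemma cmpN a k : cmp (- a) k = - cmp a k.
Proof. by rewrite /cmp mxE. Qed.
Lemma cmpB a b k : cmp (a - b) k = cmp a k - cmp b k.
Proof. by rewrite cmpD cmpN. Qed.
Lemma cmpZ (s : R) a k : cmp (s *: a) k = s * cmp a k.
Proof. by rewrite /cmp mxE. Qed.
Lemma cmp0 k : cmp 0 k = 0.
Proof. by rewrite /cmp mxE. Qed.

Definition cmpE := (cmpD, cmpN, cmpZ, cmp0, crossv0, crossv1, crossv2).

Lemma dotvC a b : dotv a b = dotv b a.
Proof. by rewrite !dotvE; ring. Qed.
Lemma dotvDl a b c : dotv (a + b) c = dotv a c + dotv b c.
Proof. by rewrite !dotvE !cmpE; ring. Qed.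
Lemma dotvDr a b c : dotv c (a + b) = dotv c a + dotv c b.
Proof. by rewrite !dotvE !cmpE; ring. Qed.
Lemma dotvNl a b : dotv (- a) b = - dotv a b.
Proof. by rewrite !dotvE !cmpE; ring. Qed.
Lemma dotvNr a b : dotv a (- b) = - dotv a b.
Proof. by rewrite !dotvE !cmpE; ring. Qed.
Lemma dotvZl (s : R) a b : dotv (s *: a) b = s * dotv a b.
Proof. by rewrite !dotvE !cmpE; ring. Qed.
Lemma dotvZr (s : R) a b : dotv a (s *: b) = s * dotv a b.
Proof. by rewrite !dotvE !cmpE; ring. Qed.
Lemma dotv0l a : dotv 0 a = 0.
Proof. by rewrite !dotvE !cmpE; ring. Qed.
Lemma dotv0r a : dotv a 0 = 0.
Proof. by rewrite !dotvE !cmpE; ring. Qed.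
Lemma dotvBl a b c : dotv (a - b) c = dotv a c - dotv b c.
Proof. by rewrite dotvDl dotvNl. Qed.
Lemma dotvBr a b c : dotv c (a - b) = dotv c a - dotv c b.
Proof. by rewrite dotvDr dotvNr. Qed.

Definition dotvLin := (dotvDl, dotvDr, dotvNl, dotvNr, dotvZl, dotvZr, dotv0l, dotv0r).

Lemma dotv_ge0 a : 0 <= dotv a a.
Proof. rewrite dotvE; by rewrite -!expr2 !addr_ge0 // sqr_ge0. Qed.

Lemma dotv_eq0 a : dotv a a = 0 -> a = 0.
Proof.
rewrite dotvE -!expr2 => H.
have h0 : cmp a 0 ^+ 2 = 0 by nra.
have h1 : cmp a 1 ^+ 2 = 0 by nra.
have h2 : cmp a 2 ^+ 2 = 0 by nra.
apply/rowP => i; rewrite mxE.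
have -> : i = inord (val i) by apply/val_inj; rewrite /= inordK.
case: i => -[|[|[|//]]] _ /=.
- by move/eqP: h0; rewrite sqrf_eq0 => /eqP.
- by move/eqP: h1; rewrite sqrf_eq0 => /eqP.
- by move/eqP: h2; rewrite sqrf_eq0 => /eqP.
Qed.

Lemma triple a b c : dotv (crossv a b) c = dotv b (crossv c a).
Proof. by rewrite !dotvE !cmpE; ring. Qed.

Lemma triple2 a b c : dotv (crossv a b) c = dotv a (crossv b c).
Proof. by rewrite !dotvE !cmpE; ring. Qed.

Lemma cross_anti a b c : dotv (crossv a b) c = - dotv (crossv a c) b.
Proof. by rewrite !dotvE !cmpE; ring. Qed.

Lemma lagrange a b : dotv (crossv a b) (crossv a b) = dotv a a * dotv b b - (dotv a b)^+2.
Proof. by rewrite !dotvE !cmpE; ring. Qed.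

Lemma cross_le a b : dotv a a = 1 -> dotv (crossv a b) (crossv a b) <= dotv b b.
Proof. move=> ha; rewrite lagrange ha mul1r lerBlDr lerDl; exact: sqr_ge0. Qed.

Lemma young a b (t : R) : 0 < t -> dotv a b <= t * dotv b b + dotv a a / (4 * t).
Proof.
move=> t0.
have := dotv_ge0 (a - (2 * t) *: b).
rewrite !(dotvDl, dotvDr, dotvNl, dotvNr, dotvZl, dotvZr) (dotvC b a) => H.
have p4 : 0 < 4 * t by lra.
have e : 4 * t * (dotv a a / (4 * t)) = dotv a a by field; lra.
rewrite -(ler_pM2l p4) mulrDr e; nra.
Qed.

Lemma sq_add a b : dotv (a + b) (a + b) <= 2 * dotv a a + 2 * dotv b b.
Proof.
have := dotv_ge0 (a - b).
rewrite !(dotvDl, dotvDr, dotvNl, dotvNr) (dotvC b a) => H.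
lra.
Qed.

End VA.
Arguments cmp {R}. Arguments sum3 {R}. Arguments dotvE {R}. Arguments dotvC {R}.
Arguments dotv_ge0 {R}. Arguments dotv_eq0 {R}. Arguments triple {R}. Arguments triple2 {R}.
Arguments cross_anti {R}. Arguments lagrange {R}. Arguments cross_le {R}. Arguments young {R}.
Arguments sq_add {R}.
Lemma youngk {R : realType} (a b : 'rV[R]_3) (k : R) : 2 * k * dotv a b <= k ^+ 2 * dotv a a + dotv b b.
Proof.
have := dotv_ge0 (k *: a - b).
rewrite !(dotvDl, dotvDr, dotvNl, dotvNr, dotvZl, dotvZr) (dotvC b a) => H.
nra.
Qed.
Lemma cross_le2 {R : realType} (a b : 'rV[R]_3) : dotv b b = 1 -> dotv (crossv a b) (crossv a b) <= dotv a a.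
Proof.
move=> hb; have -> : dotv (crossv a b) (crossv a b) = dotv a a * dotv b b - (dotv a b) ^+ 2.
  by rewrite !dotvE !cmpE; ring.
rewrite hb mulr1 lerBlDr lerDl; exact: sqr_ge0.
Qed.
Section MF.
Variable R : realType.
Implicit Types a b c v w x y xi eta z : 'rV[R]_3.

Lemma dotv_mulmx y z (A : 'M[R]_3) : dotv (y *m A) z = dotv y (z *m A^T).
Proof.
rewrite /dotv.
transitivity (\sum_(i < 3) \sum_(j < 3) y 0 j * A j i * z 0 i).
  by apply: eq_bigr => i _; rewrite mxE big_distrl.
rewrite exchange_big; apply: eq_bigr => j _; rewrite mxE big_distrr.
by apply: eq_bigr => i _; rewrite !mxE /= [z 0 i * _]mulrC mulrA.
Qed.

Variables (al be : R) (C : 'M[R]_3).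
Hypothesis al0 : 0 < al.
Hypothesis be0 : 0 < be.
Hypothesis Csym : C^T = C.
Hypothesis Cb : forall xi : 'rV[R]_3, al * dotv xi xi <= dotv (xi *m C) xi <= be * dotv xi xi.

Lemma Cunit : C \in unitmx.
Proof.
rewrite -row_free_unit; apply: inj_row_free => v Hv.
have := Cb v; rewrite Hv dotv0l => /andP[H _].
apply: dotv_eq0; have := dotv_ge0 v => h1.
have h2 : dotv v v <= 0 by rewrite -(pmulr_rle0 _ al0).
by apply/eqP; rewrite eq_le h1 h2.
Qed.

Let P := invmx C.
Definition Qf xi := dotv (xi *m P) xi.
Definition Bf xi eta := dotv (xi *m P) eta.

Lemma PC xi : xi *m P *m C = xi.
Proof. exact: (mulmxKV Cunit). Qed.

Lemma Psym : P^T = P.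
Proof. by rewrite /P trmx_inv Csym. Qed.

Lemma CBsym y z : dotv (y *m C) z = dotv (z *m C) y.
Proof. by rewrite dotv_mulmx Csym dotvC. Qed.

Lemma Bsym xi eta : Bf xi eta = Bf eta xi.
Proof. by rewrite /Bf dotv_mulmx Psym dotvC. Qed.

Lemma QfE xi : Qf xi = dotv ((xi *m P) *m C) (xi *m P).
Proof. by rewrite /Qf PC dotvC. Qed.

Lemma Q1 xi : al * dotv (xi *m P) (xi *m P) <= Qf xi.
Proof. by rewrite QfE; case/andP: (Cb (xi *m P)). Qed.

Lemma Q_ge0 xi : 0 <= Qf xi.
Proof. apply: le_trans (Q1 xi); apply: mulr_ge0; [exact: ltW|exact: dotv_ge0]. Qed.

Lemma Q2 xi : dotv xi xi <= be * Qf xi.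
Proof.
set y := xi *m P.
have hy : y *m C = xi by exact: PC.
have H0 : 0 <= dotv ((be *: y - xi) *m C) (be *: y - xi).
  case/andP: (Cb (be *: y - xi)) => H _; apply: le_trans H.
  apply: mulr_ge0; [exact: ltW|exact: dotv_ge0].
rewrite mulmxBl -scalemxAl hy !(dotvDl, dotvDr, dotvNl, dotvNr, dotvZl, dotvZr) in H0.
have e1 : dotv xi y = Qf xi by rewrite /Qf dotvC.
have e2 : dotv (xi *m C) y = dotv xi xi by rewrite CBsym hy.
have e3 := Cb xi.
case/andP: e3 => _ e3.
rewrite e1 e2 in H0.
have hQ := Q_ge0 xi.
have : be * dotv xi xi <= be * (be * Qf xi) by nra.
by rewrite ler_pM2l.
Qed.

Lemma Q3 xi : al * Qf xi <= dotv xi xi.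
Proof.
set y := xi *m P.
have H0 := dotv_ge0 (al *: y - xi).
rewrite !(dotvDl, dotvDr, dotvNl, dotvNr, dotvZl, dotvZr) in H0.
have e1 : dotv y xi = Qf xi by [].
have e2 : dotv xi y = Qf xi by rewrite /Qf dotvC.
have h1 := Q1 xi.
rewrite e1 e2 in H0.
have h2 : al * (al * dotv y y) <= al * Qf xi by rewrite ler_pM2l.
lra.
Qed.

Lemma QfD xi eta : Qf (xi + eta) = Qf xi + 2 * Bf xi eta + Qf eta.
Proof.
rewrite /Qf mulmxDl !(dotvDl, dotvDr).
have := Bsym eta xi; rewrite /Bf => ->; ring.
Qed.

Lemma QfZ (s : R) xi : Qf (s *: xi) = s ^+ 2 * Qf xi.
Proof. by rewrite /Qf -scalemxAl dotvZl dotvZr; ring. Qed.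

Lemma BfZl (s : R) xi eta : Bf (s *: xi) eta = s * Bf xi eta.
Proof. by rewrite /Bf -scalemxAl dotvZl. Qed.
Lemma BfZr (s : R) xi eta : Bf xi (s *: eta) = s * Bf xi eta.
Proof. by rewrite /Bf dotvZr. Qed.

Lemma Qmix xi eta (h : R) : 0 <= 3 / 4 * Qf xi + h * Bf xi eta + h ^+ 2 / 3 * Qf eta.
Proof.
have := Q_ge0 ((3 : R) *: xi + (2 * h) *: eta).
rewrite QfD !QfZ BfZl BfZr => H.
nra.
Qed.

End MF.
Arguments Cunit {R al be C}. Arguments PC {R al be C}. Arguments Q1 {R al be C}. Arguments Q_ge0 {R al be C}.
Arguments Q2 {R al be C}. Arguments Q3 {R al be C}. Arguments Qmix {R al be C}. Arguments Bsym {R C}.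
Arguments dotv_mulmx {R}.
Section IN.
Variable R : realType.
Local Notation RI := (@Defs.Rint R).
Local Notation mu := (@lebesgue_measure R).
Implicit Types (h x : R).

Lemma memI h x : x \in (`[0, h] : set R) = (0 <= x <= h).
Proof. by apply/idP/idP; rewrite inE /= in_itv. Qed.

Lemma Rint_cst x (c : R) : 0 <= x -> RI 0 x (fun _ => c) = c * x.
Proof.
move=> x0; rewrite /Defs.Rint Rintegral_cst //= lebesgue_measure_itv /= lte_fin.
case: ltP => [_|]; first by rewrite /= subr0.
by move=> x0'; have -> : x = 0 by apply/eqP; rewrite eq_le x0' x0.
Qed.

Lemma Rint_eq h (f g : R -> R) : (forall x, 0 <= x <= h -> f x = g x) ->
  RI 0 h f = RI 0 h g.
Proof. by move=> fg; apply: eq_Rintegral => x; rewrite memI => /fg. Qed.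

Lemma Rint_poly (p P : {poly R}) h : 0 < h -> (forall x, (P^`()).[x] = p.[x]) ->
  RI 0 h (horner p) = P.[h] - P.[0].
Proof.
move=> h0 dP; rewrite /Defs.Rint /Rintegral.
rewrite (@continuous_FTC2 _ _ (horner P)) //=.
- by apply: derivable_within_continuous => x _; exact: derivable_horner.
- split.
  + by move=> x _; exact: derivable_horner.
  + exact/cvg_at_right_filter/continuous_horner.
  + exact/cvg_at_left_filter/continuous_horner.
- by move=> x _; rewrite -derive.derivE dP.
Qed.

Lemma Rint_quad h (a b c d : R) : 0 < h ->
  RI 0 h (fun x => (a + x * b) * (c + x * d)) =
  a * c * h + (a * d + b * c) * h ^+ 2 / 2 + b * d * h ^+ 3 / 3.
Proof.
move=> h0.
pose p : {poly R} := (a * c)%:P + (a * d + b * c) *: 'X + (b * d) *: 'X^2.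
pose P : {poly R} := (a * c) *: 'X + ((a * d + b * c) / 2) *: 'X^2 + (b * d / 3) *: 'X^3.
have -> : (fun x => (a + x * b) * (c + x * d)) = horner p.
  by apply/funext => x; rewrite /p !hornerE /=; ring.
rewrite (@Rint_poly p P) //.
  by rewrite /P !hornerE /=; field; rewrite ?pnatr_eq0 //.
move=> x; rewrite /P /p !(derivD, derivZ, derivX, derivXn) !hornerE /=; field; rewrite ?pnatr_eq0 //.
Qed.

End IN.
Arguments memI {R}. Arguments Rint_cst {R}. Arguments Rint_eq {R}. Arguments Rint_poly {R}. Arguments Rint_quad {R}.
Section IN2.
Variable R : realType.
Local Notation RI := (@Defs.Rint R).
Local Notation mu := (@lebesgue_measure R).
Implicit Types (h x : R) (f g : R -> 'rV[R]_3).

Lemma ipe_sym h f g : ipe h f g = ipe h g f.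
Proof.
rewrite /ipe; apply: eq_bigr => i _; congr (Defs.Rint _ _ _).
by apply/funext => x; rewrite mulrC.
Qed.

Lemma ipe_eq h f f' g g' : (forall x, 0 <= x <= h -> f x = f' x) ->
  (forall x, 0 <= x <= h -> g x = g' x) -> ipe h f g = ipe h f' g'.
Proof.
move=> ff gg; rewrite /ipe; apply: eq_bigr => i _; apply: Rint_eq => x hx.
by rewrite ff // gg.
Qed.

Lemma ipe_lin h f g (P Q S T : 'rV[R]_3) : 0 < h ->
  (forall x, 0 <= x <= h -> f x = P + x *: Q) ->
  (forall x, 0 <= x <= h -> g x = S + x *: T) ->
  ipe h f g = h * dotv P S + h ^+ 2 / 2 * (dotv P T + dotv Q S) + h ^+ 3 / 3 * dotv Q T.
Proof.
move=> h0 ff gg; rewrite (@ipe_eq h f _ g _ ff gg) /ipe.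
transitivity (\sum_(i < 3) (P 0 i * S 0 i * h + (P 0 i * T 0 i + Q 0 i * S 0 i) * h ^+ 2 / 2
   + Q 0 i * T 0 i * h ^+ 3 / 3)).
  apply: eq_bigr => i _; rewrite -Rint_quad //; congr (Defs.Rint _ _ _).
  by apply/funext => x; rewrite !mxE.
by rewrite /dotv !sum3; ring.
Qed.

Definition Iv h f : 'rV[R]_3 := \row_j RI 0 h (fun x => f x 0 j).
Definition intg h (k : R -> R) := mu.-integrable `[0, h] (EFin \o k).

Lemma ipe_cst h f (c : 'rV[R]_3) : (forall j, intg h (fun x => f x 0 j)) ->
  ipe h f (fun _ => c) = dotv (Iv h f) c.
Proof.
move=> fi; rewrite /ipe /dotv; apply: eq_bigr => j _; rewrite mxE /Defs.Rint.
rewrite RintegralZr //; exact: fi.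
Qed.

Lemma bdd_intg h (k : R -> R) : measurable_fun `[0, h] k ->
  (exists M, forall x, 0 <= x <= h -> `|k x| <= M) -> intg h k.
Proof.
move=> mk [M HM]; apply: measurable_bounded_integrable => //.
  by rewrite /= lebesgue_measure_itv; case: ifP => _; rewrite ?ltry.
exists M; split; first by rewrite num_real.
move=> y My x Ax; apply: le_trans (HM x _) (ltW My).
by move: Ax; rewrite /= in_itv.
Qed.

Lemma L2_bdd h f : (forall j, measurable_fun `[0, h] (fun x => f x 0 j)) ->
  (forall j, exists M, forall x, 0 <= x <= h -> `|f x 0 j| <= M) -> L2 h f.
Proof.
move=> mf bf j; split; first exact: mf.
apply: (@bdd_intg h (fun x => f x 0 j ^+ 2)); first exact: measurable_funX.
case: (bf j) => M HM; exists (M * M) => x hx.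
have h1 := HM x hx; have h2 := normr_ge0 (f x 0 j).
rewrite normrX; nra.
Qed.

Lemma L2_intg h f j : L2 h f -> intg h (fun x => f x 0 j).
Proof.
move=> /(_ j) [mf fi].
have i1 : intg h (fun x => 1 + f x 0 j ^+ 2).
  rewrite /intg (_ : EFin \o _ = (EFin \o (fun=> 1)) \+ (fun x => (f x 0 j ^+ 2)%:E)); last first.
    by apply/funext => x.
  apply: integrableD => //; apply: bdd_intg; first exact: measurable_cst.
  by exists 1 => x _; rewrite normr1.
apply: le_integrable i1.
- exact: measurable_itv.
- by apply/measurable_EFinP; exact: mf.
move=> x _.
change (`|(f x 0 j)%:E| <= `|(1 + f x 0 j ^+ 2)%:E|)%E.
rewrite !abse_EFin lee_fin.
have hn : `|f x 0 j| ^+ 2 = f x 0 j ^+ 2 by rewrite real_normK ?num_real.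
have := normr_ge0 (f x 0 j).
have h3 : 0 <= 1 + f x 0 j ^+ 2 by rewrite addr_ge0 ?sqr_ge0.
rewrite (ger0_norm h3); nra.
Qed.

Definition ind (x : R) (i : 'I_3) : R -> 'rV[R]_3 :=
  fun t => \row_j ((j == i)%:R * \1_(`]-oo, x] : set R) t).

Lemma L2_cst h (c : 'rV[R]_3) : L2 h (fun _ => c).
Proof.
apply: L2_bdd => j; first exact: measurable_cst.
by exists `|c 0 j|.
Qed.

Lemma L2_ind h x i : L2 h (ind x i).
Proof.
apply: L2_bdd => j.
  rewrite (_ : (fun t => _) = (fun t => (j == i)%:R * \1_(`]-oo, x] : set R) t)); last first.
    by apply/funext => t; rewrite mxE.
  apply: measurable_funM; first exact: measurable_cst.
  exact: measurable_indic.
exists 1 => t _; rewrite mxE indicE normrM.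
by case: (j == i); case: (t \in _); rewrite ?normr0 ?normr1 ?mul0r ?mul1r.
Qed.

Lemma ipe_ind h x i f : 0 <= x <= h -> ipe h f (ind x i) = RI 0 x (fun t => f t 0 i).
Proof.
case/andP=> x0 xh; have h0 : 0 <= h := le_trans x0 xh.
rewrite /ipe (bigD1 i) //= big1 ?addr0; last first.
  move=> j ji; rewrite (_ : (fun t => _) = fun _ => 0); first by rewrite Rint_cst // mul0r.
  by apply/funext => t; rewrite mxE (negbTE ji) mul0r mulr0.
rewrite /Defs.Rint.
have -> : (`[0, x] : set R) = `[0, h] `&` `]-oo, x].
  apply/seteqP; split => t /=; rewrite !in_itv /=.
    by case/andP => t0 tx; rewrite t0 tx (le_trans tx xh).
  by case=> /andP[-> _] ->.
rewrite Rintegral_mkcondr; apply: eq_Rintegral => t _.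
rewrite patchE mxE eqxx mul1r indicE; case: (t \in _) => /=; first by rewrite mulr1.
by rewrite mulr0.
Qed.

Lemma H1d_cst h (c : 'rV[R]_3) : H1d h (fun _ => c) (fun _ => 0).
Proof.
split; first exact: L2_cst.
move=> x /andP[x0 _] i.
rewrite (_ : (fun t => _) = fun _ => 0); first by rewrite Rint_cst // mul0r addr0.
by apply/funext => t; rewrite mxE.
Qed.

Lemma H1d_lin h (c : 'rV[R]_3) : H1d h (fun x => x *: c) (fun _ => c).
Proof.
split; first exact: L2_cst.
move=> x /andP[x0 _] i.
by rewrite Rint_cst // !mxE mul0r add0r mulrC.
Qed.

End IN2.
Arguments ipe_sym {R}. Arguments ipe_eq {R}. Arguments ipe_lin {R}. Arguments Iv {R}. Arguments intg {R}.
Arguments ipe_cst {R}. Arguments bdd_intg {R}. Arguments L2_bdd {R}. Arguments L2_intg {R}. Arguments ind {R}.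
Arguments L2_cst {R}. Arguments L2_ind {R}. Arguments ipe_ind {R}. Arguments H1d_cst {R}. Arguments H1d_lin {R}.
Section IN3.
Variable R : realType.
Local Notation RI := (@Defs.Rint R).
Implicit Types (h x : R) (f g : R -> 'rV[R]_3).

Lemma intgB h (k1 k2 : R -> R) : intg h k1 -> intg h k2 -> intg h (fun x => k1 x - k2 x).
Proof.
move=> i1 i2; rewrite /intg (_ : EFin \o _ = ((EFin \o k1) \- (EFin \o k2))%E).
  exact: integrableB.
by apply/funext => x.
Qed.

Lemma intgZ h (c : R) (k : R -> R) : intg h k -> intg h (fun x => c * k x).
Proof.
move=> i1; rewrite /intg (_ : EFin \o _ = (fun x => c%:E * (EFin \o k) x)%E).
  exact: integrableZl.
by apply/funext => x /=; rewrite EFinM.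
Qed.

Lemma RintB h (k1 k2 : R -> R) : intg h k1 -> intg h k2 ->
  RI 0 h (fun x => k1 x - k2 x) = RI 0 h k1 - RI 0 h k2.
Proof. by move=> i1 i2; rewrite /Defs.Rint RintegralB. Qed.

Lemma RintZ h (c : R) (k : R -> R) : intg h k -> RI 0 h (fun x => c * k x) = c * RI 0 h k.
Proof. by move=> i1; rewrite /Defs.Rint RintegralZl. Qed.

Lemma ordE (j : 'I_3) : j = inord 0 \/ j = inord 1 \/ j = inord 2.
Proof.
have -> : j = inord (val j) by apply/val_inj; rewrite /= inordK.
by case: j => -[|[|[|//]]] _ /=; auto.
Qed.

Lemma cmp_L2 h f k : L2 h f -> intg h (fun x => cmp (f x) k).
Proof. by move=> H; apply: L2_intg. Qed.

Lemma intg_cross h f (a : 'rV[R]_3) j : L2 h f -> intg h (fun x => (crossv a (f x)) 0 j).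
Proof.
move=> Lf.
case: (ordE j) => [->|[->|->]].
- rewrite (_ : (fun x => _) = fun x => cmp a 1 * cmp (f x) 2 - cmp a 2 * cmp (f x) 1).
    by apply: intgB; apply: intgZ; exact: cmp_L2.
  by apply/funext => x; rewrite -crossv0.
- rewrite (_ : (fun x => _) = fun x => cmp a 2 * cmp (f x) 0 - cmp a 0 * cmp (f x) 2).
    by apply: intgB; apply: intgZ; exact: cmp_L2.
  by apply/funext => x; rewrite -crossv1.
- rewrite (_ : (fun x => _) = fun x => cmp a 0 * cmp (f x) 1 - cmp a 1 * cmp (f x) 0).
    by apply: intgB; apply: intgZ; exact: cmp_L2.
  by apply/funext => x; rewrite -crossv2.
Qed.

Lemma cmp_Iv h f k : cmp (Iv h f) k = RI 0 h (fun x => cmp (f x) k).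
Proof. by rewrite /cmp mxE. Qed.

Lemma Iv_cross h f (a : 'rV[R]_3) : L2 h f ->
  Iv h (fun x => crossv a (f x)) = crossv a (Iv h f).
Proof.
move=> Lf; apply/rowP => j; rewrite mxE.
case: (ordE j) => [->|[->|->]].
- rewrite (_ : (fun x => _) = fun x => cmp a 1 * cmp (f x) 2 - cmp a 2 * cmp (f x) 1).
    rewrite RintB ?RintZ; try (apply: intgZ); try exact: cmp_L2.
    by rewrite -[RHS]/(cmp _ 0) crossv0 !cmp_Iv.
  by apply/funext => x; rewrite -crossv0.
- rewrite (_ : (fun x => _) = fun x => cmp a 2 * cmp (f x) 0 - cmp a 0 * cmp (f x) 2).
    rewrite RintB ?RintZ; try (apply: intgZ); try exact: cmp_L2.
    by rewrite -[RHS]/(cmp _ 1) crossv1 !cmp_Iv.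
  by apply/funext => x; rewrite -crossv1.
- rewrite (_ : (fun x => _) = fun x => cmp a 0 * cmp (f x) 1 - cmp a 1 * cmp (f x) 0).
    rewrite RintB ?RintZ; try (apply: intgZ); try exact: cmp_L2.
    by rewrite -[RHS]/(cmp _ 2) crossv2 !cmp_Iv.
  by apply/funext => x; rewrite -crossv2.
Qed.

End IN3.
Arguments intgB {R}. Arguments intgZ {R}. Arguments RintB {R}. Arguments RintZ {R}.
Arguments cmp_L2 {R}. Arguments intg_cross {R}. Arguments cmp_Iv {R}. Arguments Iv_cross {R}.
Section SC.
Variable R : realType.

Lemma ge0M {a b : R} : 0 <= a -> 0 <= b -> 0 <= a * b.
Proof. exact: mulr_ge0. Qed.
Lemma subge0 {a b : R} : a <= b -> 0 <= b - a.
Proof. by rewrite subr_ge0. Qed.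

Lemma scal_lower (an bn am h W D Z2 yN y0 yK x1 QN Q0 QK : R) :
  0 < an -> 0 < bn -> 0 < am -> 0 < h -> h <= 1 -> 0 <= W ->
  h * QN <= W -> h * Q0 <= 4 * W ->
  0 <= yN -> 0 <= y0 -> 0 <= yK ->
  D <= h ^+ 2 * (2 * y0 + h ^+ 2 / 2 * yK) ->
  Z2 <= 3 * h ^+ 2 * yN + 3 / 4 * h ^+ 4 * y0 + 1 / 3 * h ^+ 6 * yK ->
  an * yN <= QN -> am * y0 <= Q0 -> am * yK <= QK -> am * QK <= x1 -> x1 <= bn * QN ->
  an * am ^+ 2 * (D + Z2) <= h * W * (3 * am ^+ 2 + 11 * an * am + an * bn).
Proof.
move=> an0 bn0 am0 h0 h1 W0 hQN hQ0 yN0 y00 yK0 HD HZ HN H0 HK1 HK2 HK3.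
have an0' := ltW an0; have am0' := ltW am0; have bn0' := ltW bn0; have h0' := ltW h0.
have am2 : 0 <= am ^+ 2 by rewrite sqr_ge0.
have hh : 0 <= h ^+ 2 by rewrite sqr_ge0.
have c0 : 0 <= an * am ^+ 2 by rewrite ge0M.
have h21 : 0 <= 1 - h ^+ 2 by rewrite subge0 // expr_le1.
have h41 : 0 <= 1 - h ^+ 4 by rewrite subge0 // expr_le1.
have f1 := ge0M c0 (subge0 HD).
have f2 := ge0M c0 (subge0 HZ).
have f3 := ge0M c0 (ge0M h21 (ge0M hh y00)).
have f4 := ge0M c0 (ge0M h21 (ge0M hh yK0)).
have f5 := ge0M c0 (ge0M h41 (ge0M hh yK0)).
have f6 := ge0M (ge0M (ge0M an0' am0') hh) (subge0 H0).
have f7 := ge0M (ge0M (ge0M an0' am0') h0') (subge0 hQ0).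
have f8 := ge0M (ge0M (ge0M an0' hh) am0') (subge0 HK1).
have f9 := ge0M (ge0M an0' hh) (subge0 HK2).
have f10 := ge0M (ge0M an0' hh) (subge0 HK3).
have f11 := ge0M (ge0M (ge0M an0' bn0') h0') (subge0 hQN).
have f12 := ge0M (ge0M am2 hh) (subge0 HN).
have f13 := ge0M (ge0M am2 h0') (subge0 hQN).
have f14 := ge0M (ge0M (ge0M an0' bn0') h0') W0.
lra.
Qed.

Lemma scal_upper (bn bm h W U D L s1 s2 s3 x1 x2 x3 QN Q0 : R) :
  0 < bn -> 0 < bm -> 0 < h -> 0 <= W ->
  W = - (s1 + s2 + h * s3) ->
  2 * (2 * bn + 4 * bm) * (- (h * s1)) <= (2 * bn + 4 * bm) ^+ 2 * U + h ^+ 2 * x1 ->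
  2 * (2 * bn + 4 * bm) * (- (h * s2)) <= (2 * bn + 4 * bm) ^+ 2 * D + h ^+ 2 * x2 ->
  2 * (2 * bn + 4 * bm) * (- (h ^+ 2 * s3)) <= (2 * bn + 4 * bm) ^+ 2 * (h ^+ 2 * L) + h ^+ 2 * x3 ->
  x3 <= x1 -> x1 <= bn * QN -> x2 <= bm * Q0 -> h * QN <= W -> h * Q0 <= 4 * W ->
  h * W <= (2 * bn + 4 * bm) * (U + D + h ^+ 2 * L).
Proof.
move=> bn0 bm0 h0 W0 HW y1 y2 y3 H31 H1 H2 hQN hQ0.
set c := 2 * bn + 4 * bm.
have c0 : 0 < c by rewrite /c; lra.
have h0' := ltW h0.
have hh : 0 <= h ^+ 2 by rewrite sqr_ge0.
have f1 := ge0M hh (subge0 H31).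
have f2 := ge0M hh (subge0 H1).
have f3 := ge0M hh (subge0 H2).
have f4 := ge0M (ge0M h0' (ltW bn0)) (subge0 hQN).
have f5 := ge0M (ge0M h0' (ltW bm0)) (subge0 hQ0).
have key : c * (h * W) <= c * (c * (U + D + h ^+ 2 * L)).
  rewrite /c in y1 y2 y3 *; rewrite HW; rewrite HW in f4 f5; lra.
by rewrite ler_pM2l in key.
Qed.

End SC.
Arguments ge0M {R a b}. Arguments subge0 {R a b}. Arguments scal_lower {R}. Arguments scal_upper {R}.
Section GS.
Variables (R : realType) (nN nE : nat) (pos : 'I_nN -> 'rV[R]_3) (ends : 'I_nE -> 'I_nN * 'I_nN).
Hypothesis Hne : forall e, (ends e).1 != (ends e).2.

Lemma sum_sel (b : 'I_nN) (g : 'I_nN -> R) : \sum_(a < nN) (if b == a then g a else 0) = g b.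
Proof.
rewrite (bigD1 b) //= eqxx big1 ?addr0 // => a.
by rewrite eq_sym => /negbTE ->.
Qed.

Lemma sum_inc (F : 'I_nN -> 'I_nE -> R) :
  \sum_(a < nN) \sum_(e < nE | ((ends e).1 == a) || ((ends e).2 == a)) F a e =
  \sum_(e < nE) (F (ends e).1 e + F (ends e).2 e).
Proof.
under eq_bigr do rewrite big_mkcond.
rewrite exchange_big; apply: eq_bigr => e _ /=.
rewrite (bigD1 (ends e).1) //= eqxx /= (bigD1 (ends e).2) /=; last by rewrite eq_sym Hne.
rewrite eqxx orbT big1 ?addr0 // => a /andP[a1 a2].
by rewrite eq_sym (negbTE a1) eq_sym (negbTE a2).
Qed.

Lemma dotv_symB (a b : 'rV[R]_3) : dotv (a - b) (a - b) = dotv (b - a) (b - a).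
Proof. by rewrite -opprB dotvNl dotvNr opprK. Qed.

Lemma LformE mu : Lform pos ends mu mu =
  \sum_(e < nE) dotv (mu (ends e).2 - mu (ends e).1) (mu (ends e).2 - mu (ends e).1) / edge_len pos ends e.
Proof.
rewrite /Lform -big_distrr /= sum_inc big_distrr; apply: eq_bigr => e _.
rewrite /other eqxx (negbTE (Hne e)) dotv_symB /=.
move: (_ / edge_len pos ends e) => y; by field.
Qed.

Lemma MformE mu : Mform pos ends mu mu =
  \sum_(e < nE) (edge_len pos ends e * dotv (mu (ends e).1) (mu (ends e).1)
                + edge_len pos ends e * dotv (mu (ends e).2) (mu (ends e).2)) / 2.
Proof.
rewrite /Mform -big_distrr /= sum_inc big_distrr; apply: eq_bigr => e _ /=.
field; rewrite ?pnatr_eq0 //.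
Qed.

Lemma dotv_suml (I : finType) (v : I -> 'rV[R]_3) w :
  dotv (\sum_i v i) w = \sum_i dotv (v i) w.
Proof.
apply: (big_morph (fun x => dotv x w)) => [x y|]; first exact: dotvDl.
exact: dotv0l.
Qed.

Lemma dotv_if (b : bool) (x w : 'rV[R]_3) : dotv (if b then x else 0) w = if b then dotv x w else 0.
Proof. by case: b; rewrite ?dotv0l. Qed.

Lemma jump_sum (f0 fh : 'I_nE -> 'rV[R]_3) (lam : 'I_nN -> 'rV[R]_3) :
  \sum_(a < nN) dotv (jumpn ends f0 fh a) (lam a) =
  \sum_(e < nE) (dotv (fh e) (lam (ends e).2) - dotv (f0 e) (lam (ends e).1)).
Proof.
under eq_bigr do rewrite /jumpn dotv_suml.
rewrite exchange_big; apply: eq_bigr => e _ /=.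
under eq_bigr do rewrite dotvBl !dotv_if.
by rewrite sumrB !sum_sel.
Qed.

Lemma AformE (ND : {set 'I_nN}) (N0 Nh M0 Mh : 'I_nE -> 'rV[R]_3) (lam phi : 'I_nN -> 'rV[R]_3) :
  inV ND lam -> inV ND phi ->
  Aform ends ND N0 Nh M0 Mh lam phi =
  \sum_(e < nE) - (dotv (Nh e) (lam (ends e).2) - dotv (N0 e) (lam (ends e).1)
                  + dotv (Mh e) (phi (ends e).2) - dotv (M0 e) (phi (ends e).1)).
Proof.
move=> Hl Hp; rewrite /Aform big_mkcond /=.
rewrite (eq_bigr (fun a => dotv (jumpn ends N0 Nh a) (lam a) + dotv (jumpn ends M0 Mh a) (phi a))); last first.
  move=> a _; case: ifP => // /negbFE aN.
  by rewrite (Hl a aN) (Hp a aN) !dotv0r addr0.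
rewrite big_split /= !jump_sum -big_split /= -sumrN; apply: eq_bigr => e _.
by rewrite addrA.
Qed.

End GS.
Arguments sum_sel {R nN}. Arguments sum_inc {R nN nE ends}. Arguments LformE {R nN nE pos ends}.
Arguments MformE {R nN nE pos ends}. Arguments AformE {R nN nE ends}.
Section PO.
Variables (R : realType) (nN nE : nat) (pos : 'I_nN -> 'rV[R]_3) (ends : 'I_nE -> 'I_nN * 'I_nN).
Variable ND : {set 'I_nN}.
Hypothesis Hne : forall e, (ends e).1 != (ends e).2.
Hypothesis Hh : forall e, 0 < edge_len pos ends e.
Hypothesis Hc : forall a b, connect (adj ends) a b.
Hypothesis HND : ND != finset.set0.

Definition Sd (mu : 'I_nN -> 'rV[R]_3) :=
  \sum_(e < nE) dotv (mu (ends e).2 - mu (ends e).1) (mu (ends e).2 - mu (ends e).1).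

Lemma term_le_sum (F : 'I_nE -> R) e : (forall e, 0 <= F e) -> F e <= \sum_(e0 < nE) F e0.
Proof. by move=> F0; rewrite (bigD1 e) //= lerDl sumr_ge0. Qed.

Lemma Sd_ge0 mu : 0 <= Sd mu.
Proof. by apply: sumr_ge0 => e _; exact: dotv_ge0. Qed.

Lemma adj_le mu x y : adj ends x y -> dotv (mu y - mu x) (mu y - mu x) <= Sd mu.
Proof.
move/existsP => [e /orP[/eqP E|/eqP E]].
- have := term_le_sum (fun e => dotv (mu (ends e).2 - mu (ends e).1) (mu (ends e).2 - mu (ends e).1)) e.
  by rewrite E /=; apply => e0; exact: dotv_ge0.
- have := term_le_sum (fun e => dotv (mu (ends e).2 - mu (ends e).1) (mu (ends e).2 - mu (ends e).1)) e.
  by rewrite E /= dotv_symB; apply => e0; exact: dotv_ge0.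
Qed.

Lemma walk (p : seq 'I_nN) x :
  (exists K, 0 <= K /\ forall mu, inV ND mu -> dotv (mu x) (mu x) <= K * Sd mu) ->
  path (adj ends) x p ->
  exists K, 0 <= K /\ forall mu, inV ND mu -> dotv (mu (last x p)) (mu (last x p)) <= K * Sd mu.
Proof.
elim: p x => [|y p IH] x Hx //= /andP[axy pp]; apply: IH pp.
case: Hx => K [K0 HK]; exists (2 * K + 2); split; first lra.
move=> mu Hmu.
have h1 := @adj_le mu x y axy.
have h2 := sq_add (mu x) (mu y - mu x).
rewrite addrC subrK in h2.
have h3 := HK mu Hmu.
have h4 := Sd_ge0 mu.
lra.
Qed.

Lemma node_bound a : exists K, 0 <= K /\ forall mu, inV ND mu -> dotv (mu a) (mu a) <= K * Sd mu.
Proof.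
case/set0Pn: HND => D DND.
case/connectP: (Hc D a) => p pp ->.
apply: walk pp; exists 0; split => // mu Hmu.
by rewrite (Hmu D DND) dotv0l mul0r.
Qed.

Definition Htot := \sum_(e < nE) edge_len pos ends e.

Lemma Sd_le_L mu : Sd mu <= Htot * Lform pos ends mu mu.
Proof.
rewrite (LformE Hne) /Htot /Sd big_distrr; apply: ler_sum => e _.
set dd := dotv _ _.
have hle : edge_len pos ends e <= Htot.
  by apply: (term_le_sum (fun e => edge_len pos ends e)) => e0; exact: ltW.
have e1 : dd = edge_len pos ends e * (dd / edge_len pos ends e).
  by field; rewrite gt_eqF.
rewrite {1}e1; apply: ler_wpM2r => //.
by rewrite divr_ge0 ?dotv_ge0 // ltW.
Qed.

Lemma L_ge0 mu : 0 <= Lform pos ends mu mu.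
Proof.
rewrite (LformE Hne); apply: sumr_ge0 => e _.
by rewrite divr_ge0 ?dotv_ge0 // ltW.
Qed.

Lemma M_le_L : exists kap, 0 <= kap /\ forall mu, inV ND mu -> Mform pos ends mu mu <= kap * Lform pos ends mu mu.
Proof.
have [Kf HK] := choice node_bound.
pose kap0 := \sum_(e < nE) (edge_len pos ends e * Kf (ends e).1 + edge_len pos ends e * Kf (ends e).2) / 2.
have kap00 : 0 <= kap0.
  apply: sumr_ge0 => e _; have := Hh e; have := (HK (ends e).1).1; have := (HK (ends e).2).1.
  move=> a b c; apply: divr_ge0 => //; apply: addr_ge0; apply: mulr_ge0 => //; exact: ltW.
have H0 : 0 <= Htot by apply: sumr_ge0 => e _; exact: ltW.
exists (kap0 * Htot); split; first exact: mulr_ge0.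
move=> mu Hmu; rewrite (MformE Hne) -mulrA.
apply: le_trans (_ : kap0 * Sd mu <= _); last first.
  by apply: ler_wpM2l => //; exact: Sd_le_L.
rewrite /kap0 big_distrl /=; apply: ler_sum => e _.
have a1 := (HK (ends e).1).2 mu Hmu.
have a2 := (HK (ends e).2).2 mu Hmu.
have hp := ltW (Hh e).
have b1 := ler_wpM2l hp a1.
have b2 := ler_wpM2l hp a2.
lra.
Qed.

Lemma M_pos mu : inV ND mu -> mu <> (fun _ => 0) -> 0 < Mform pos ends mu mu.
Proof.
move=> Hmu nz.
have [a na] : exists a, mu a != 0.
  case: (pselect (exists a, mu a != 0)) => // H; exfalso; apply: nz; apply/funext => a.
  by case: (eqVneq (mu a) 0) => // na; exfalso; apply: H; exists a.
case/set0Pn: HND => D DND.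
have aD : a != D by apply: contraNneq na => ->; rewrite (Hmu D DND).
case/connectP: (Hc a D) => p pp Dl.
case: p pp Dl => [_ /= Da|y p /= /andP[ay _] _]; first by rewrite Da eqxx in aD.
case/existsP: ay => e He.
have pa : 0 < dotv (mu a) (mu a).
  rewrite lt_def dotv_ge0 andbT; apply/eqP => /dotv_eq0 E; by rewrite E eqxx in na.
rewrite (MformE Hne).
have T0 : forall e0, 0 <= (edge_len pos ends e0 * dotv (mu (ends e0).1) (mu (ends e0).1)
   + edge_len pos ends e0 * dotv (mu (ends e0).2) (mu (ends e0).2)) / 2.
  move=> e0; apply: divr_ge0 => //; apply: addr_ge0; apply: mulr_ge0; rewrite ?dotv_ge0 //; exact: ltW (Hh e0).
apply: lt_le_trans (term_le_sum _ e T0).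
have he := Hh e.
have q1 := dotv_ge0 (mu (ends e).1).
have q2 := dotv_ge0 (mu (ends e).2).
case/orP: He => /eqP E; rewrite E /=.
- have := mulr_gt0 he pa; have := mulr_ge0 (ltW he) q2; rewrite E /= => *; lra.
- have := mulr_gt0 he pa; have := mulr_ge0 (ltW he) q1; rewrite E /= => *; lra.
Qed.

Lemma poinc phi : inV ND phi ->
  Mform pos ends phi phi <= `|(lam_min pos ends ND)^-1| * Lform pos ends phi phi.
Proof.
move=> Hp.
case: (pselect (phi = fun _ => 0)) => [->|nz].
  rewrite (MformE Hne) big1 ?mulr_ge0 ?normr_ge0 ?L_ge0 // => e _.
  by rewrite !dotv0l !mulr0 addr0 mul0r.
have Mp := @M_pos phi Hp nz.
have [kap [kap0 Hk]] := M_le_L.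
have Lp : 0 < kap * Lform pos ends phi phi := lt_le_trans Mp (Hk phi Hp).
have kp : 0 < kap.
  rewrite lt_def kap0 andbT; apply/eqP => k0; by rewrite k0 mul0r ltxx in Lp.
set E := [set Lform pos ends mu mu / Mform pos ends mu mu | mu in [set mu | inV ND mu /\ mu <> (fun _ => 0)]].
have lb : lbound E kap^-1.
  move=> y [mu [Hmu nzm] <-].
  have Mm := @M_pos mu Hmu nzm.
  rewrite ler_pdivlMr // ler_pdivrMl //; exact: Hk.
have neE : nonempty E by exists (Lform pos ends phi phi / Mform pos ends phi phi); exists phi.
have lm0 : kap^-1 <= lam_min pos ends ND by apply: lb_le_inf.
have lmp : 0 < lam_min pos ends ND by apply: lt_le_trans lm0; rewrite invr_gt0.
have le1 : lam_min pos ends ND <= Lform pos ends phi phi / Mform pos ends phi phi.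
  by apply: ge_inf; [exists kap^-1 | exists phi].
rewrite gtr0_norm ?invr_gt0 //.
rewrite ler_pdivlMr // in le1.
rewrite ler_pdivlMl //; lra.
Qed.

End PO.
Arguments poinc {R nN nE pos ends ND}. Arguments L_ge0 {R nN nE pos ends}.
Section Edge.
Variable R : realType.
Local Notation RI := (@Defs.Rint R).

Definition cbnd (a b : R) (C : 'M[R]_3) :=
  forall xi : 'rV[R]_3, a * dotv xi xi <= dotv (xi *m C) xi <= b * dotv xi xi.

Lemma edge_main (an bn am bm h : R) (ie : 'rV[R]_3) (Cn Cm : 'M[R]_3) (uk ul rk rl : 'rV[R]_3)
  (u r n m : R -> 'rV[R]_3) :
  0 < an -> 0 < bn -> 0 < am -> 0 < bm -> 0 < h -> h <= 1 -> dotv ie ie = 1 ->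
  Cn^T = Cn -> cbnd an bn Cn -> Cm^T = Cm -> cbnd am bm Cm ->
  local_sol h ie Cn Cm uk ul rk rl u r n m ->
  forall W, W = - (dotv (n h) ul - dotv (n 0) uk + dotv (m h) rl - dotv (m 0) rk) ->
  0 <= W /\
  h * W <= (2 * bn + 4 * bm) * (dotv (ul - uk) (ul - uk) + dotv (rl - rk) (rl - rk) + h ^+ 2 * dotv rl rl) /\
  an * am ^+ 2 * (dotv (rl - rk) (rl - rk) + dotv (ul - uk + h *: crossv ie rl) (ul - uk + h *: crossv ie rl))
    <= h * W * (3 * am ^+ 2 + 11 * an * am + an * bn).
Proof.
move=> an0 bn0 am0 bm0 h0 h1 ie1 Cns Cnb Cms Cmb [Lu [Lr [dn [dm [Hn [Hm [E1 [E2 [E3 E4]]]]]]]]] W HW.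
have hh : 0 <= h := ltW h0.
have hin : 0 <= h <= h by rewrite hh lexx.
move HN : (n 0) => N; move HM : (m 0) => M0.
have [J HJ] : exists J, J = crossv ie N by eexists.
have nconst : forall x, 0 <= x <= h -> n x = N.
  move=> x hx; apply/rowP => i; rewrite (Hn.2 x hx i).
  have := E3 (ind x i) (L2_ind h x i); rewrite ipe_ind // => ->.
  by rewrite addr0 HN.
have mlin : forall x, 0 <= x <= h -> m x = M0 + x *: (- J).
  move=> x hx; case/andP: (hx) => x0 xh; apply/rowP => i; rewrite (Hm.2 x hx i).
  have := E4 (ind x i) (L2_ind h x i); rewrite !ipe_ind //.
  rewrite (Rint_eq x _ (fun _ => J 0 i)); last first.
    move=> t /andP[t0 tx]; have ht : 0 <= t <= h by rewrite t0 (le_trans tx xh).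
    by rewrite nconst // HJ.
  rewrite Rint_cst // HM => E.
  rewrite !mxE; lra.
have iR : forall j, intg h (fun x => r x 0 j) := fun j => L2_intg h r j Lr.
have iU : forall j, intg h (fun x => u x 0 j) := fun j => L2_intg h u j Lu.
have iX : forall j, intg h (fun x => crossv ie (r x) 0 j) := fun j => intg_cross h r ie j Lr.
move HRv : (Iv h r) => Rv.
have Xr : forall c, ipe h (fun x => crossv ie (r x)) (fun _ => c) = dotv (crossv ie Rv) c.
  by move=> c; rewrite ipe_cst // Iv_cross // HRv.
have Rc : forall c, ipe h r (fun _ => c) = dotv Rv c by move=> c; rewrite ipe_cst // HRv.
have U0 : ipe h u (fun _ => 0) = 0 by rewrite ipe_cst // dotv0r.
have nP : forall x, 0 <= x <= h -> n x *m invmx Cn = N *m invmx Cn + x *: 0.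
  by move=> x hx; rewrite nconst // scaler0 addr0.
have nL : forall x, 0 <= x <= h -> n x = N + x *: 0.
  by move=> x hx; rewrite nconst // scaler0 addr0.
have mP : forall x, 0 <= x <= h -> m x *m invmx Cm = M0 *m invmx Cm + x *: ((- J) *m invmx Cm).
  by move=> x hx; rewrite mlin // mulmxDl scalemxAl.
have cL : forall (c : 'rV[R]_3) x, 0 <= x <= h -> c = c + x *: 0.
  by move=> c x _; rewrite scaler0 addr0.
have lL : forall (c : 'rV[R]_3) x, 0 <= x <= h -> x *: c = 0 + x *: c.
  by move=> c x _; rewrite add0r.
have e1 := E1 n dn Hn.
rewrite (ipe_lin h _ _ _ _ _ _ h0 nP nL) in e1.
rewrite (ipe_sym h u dn) (E3 u Lu) in e1.
have ee : ipe h (fun x => crossv ie (r x)) n = ipe h (fun x => crossv ie (r x)) (fun _ => N).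
  by apply: ipe_eq => // x hx; rewrite nconst.
rewrite ee in e1.
rewrite Xr HN (nconst h hin) in e1.
have e2 := E2 m dm Hm.
rewrite (ipe_lin h _ _ _ _ _ _ h0 mP mlin) in e2.
have e4 := E4 r Lr.
rewrite (ipe_sym h dm r) in e4.
have e4' : ipe h (fun x => crossv ie (n x)) r = dotv Rv J.
  rewrite ipe_sym -Rc; apply: ipe_eq => // x hx.
  by rewrite nconst // HJ.
rewrite HM (mlin h hin) in e2.
have tp : dotv (crossv ie Rv) N = - dotv Rv J by rewrite cross_anti -HJ dotvC.
rewrite !dotv0l !dotv0r in e1.
rewrite (nconst h hin) HN (mlin h hin) HM in HW.
rewrite (dotvC N ul) (dotvC N uk) (dotvC (M0 + _) rl) (dotvC M0 rk) in HW.
change (dotv (N *m invmx Cn) N) with (Qf R Cn N) in e1.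
change (dotv (M0 *m invmx Cm) M0) with (Qf R Cm M0) in e2.
change (dotv (- J *m invmx Cm) (- J)) with (Qf R Cm (- J)) in e2.
change (dotv (M0 *m invmx Cm) (- J)) with (Bf R Cm M0 (- J)) in e2.
change (dotv (- J *m invmx Cm) M0) with (Bf R Cm (- J) M0) in e2.
rewrite (Bsym Cms (- J) M0) in e2.
have Wid : W = h * Qf R Cn N + (h * Qf R Cm M0 + h ^+ 2 / 2 * (Bf R Cm M0 (- J) + Bf R Cm M0 (- J))
   + h ^+ 3 / 3 * Qf R Cm (- J)).
  lra.
have QN0 := Q_ge0 an0 Cnb N.
have Q00 := Q_ge0 am0 Cmb M0.
have mix := ge0M hh (Qmix am0 Cms Cmb M0 (- J) h).
have W0 : 0 <= W by nra.
have hQN : h * Qf R Cn N <= W by nra.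
have hQ0 : h * Qf R Cm M0 <= 4 * W by nra.
have x31 : dotv (- J) (- J) <= dotv N N.
  by rewrite dotvNl dotvNr opprK HJ; exact: cross_le.
have x1b := Q2 an0 bn0 Cns Cnb N.
have x2b := Q2 am0 bm0 Cms Cmb M0.
split => //.
have HW' : W = - (dotv (ul - uk) N + dotv (rl - rk) M0 + h * dotv rl (- J)).
  by rewrite HW !(dotvBl, dotvDr, dotvZr); lra.
split.
  set c := 2 * bn + 4 * bm.
  have y1 := youngk (ul - uk) (- (h *: N)) c.
  have y2 := youngk (rl - rk) (- (h *: M0)) c.
  have y3 := youngk (h *: rl) (- (h *: - J)) c.
  rewrite !(dotvNl, dotvNr, dotvZl, dotvZr) in y1 y2 y3.
  rewrite !(dotvNl, dotvNr, dotvZl, dotvZr) in HW' x31.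
  apply: (scal_upper bn bm h W (dotv (ul - uk) (ul - uk)) (dotv (rl - rk) (rl - rk)) (dotv rl rl)
     (dotv (ul - uk) N) (dotv (rl - rk) M0) (- dotv rl J) (dotv N N) (dotv M0 M0) (dotv J J)
     (Qf R Cn N) (Qf R Cm M0)) => //; rewrite -/c; try lra.
move HZd : (ul - uk + h *: crossv ie rl) => Z.
have t3 := E2 (fun _ => rl - rk) (fun _ => 0) (H1d_cst h (rl - rk)).
rewrite (ipe_lin h _ _ _ _ _ _ h0 mP (cL (rl - rk))) Rc ?dotv0l ?dotv0r in t3.
have t2 := E1 (fun _ => Z) (fun _ => 0) (H1d_cst h Z).
rewrite (ipe_lin h _ _ _ _ _ _ h0 nP (cL Z)) U0 Xr ?dotv0l ?dotv0r in t2.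
have t4 := E2 (fun x => x *: crossv Z ie) (fun _ => crossv Z ie) (H1d_lin h (crossv Z ie)).
rewrite (ipe_lin h _ _ _ _ _ _ h0 mP (lL (crossv Z ie))) Rc ?dotv0l ?dotv0r in t4.
rewrite scale0r dotv0r dotvZr in t4.
rewrite triple in t2.
have trl : dotv rl (crossv Z ie) = dotv (crossv ie rl) Z by rewrite triple.
rewrite trl in t4.
have eZ : dotv Z Z = dotv ul Z - dotv uk Z + h * dotv (crossv ie rl) Z.
  by rewrite -{1}HZd dotvDl dotvBl dotvZl.
have eD : dotv (rl - rk) (rl - rk) = dotv rl (rl - rk) - dotv rk (rl - rk) by rewrite dotvBl.
set X := M0 *m invmx Cm + (h / 2) *: (- J *m invmx Cm).
have yD := youngk X (- (rl - rk)) h.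
have eX : dotv X (- (rl - rk)) = - (dotv (M0 *m invmx Cm) (rl - rk) + h / 2 * dotv (- J *m invmx Cm) (rl - rk)).
  by rewrite /X dotvNr dotvDl dotvZl.
rewrite eX dotvNl dotvNr opprK in yD.
have sX := sq_add (M0 *m invmx Cm) ((h / 2) *: (- J *m invmx Cm)).
rewrite -/X dotvZl dotvZr in sX.
have hh2 : 0 <= h ^+ 2 by rewrite sqr_ge0.
have sX' := ge0M hh2 (subge0 sX).
have Yn := youngk (N *m invmx Cn) (- Z) (3 * h).
have Y0 := youngk ((h / 2) *: (M0 *m invmx Cm)) (- crossv Z ie) (3 * h).
have YK := youngk ((h ^+ 2 / 3) *: (- J *m invmx Cm)) (- crossv Z ie) (3 * h).
rewrite !(dotvNl, dotvNr, dotvZl, dotvZr, opprK) in Yn Y0 YK.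
have cw := cross_le2 Z ie ie1.
have yN0 := dotv_ge0 (N *m invmx Cn).
have y00 := dotv_ge0 (M0 *m invmx Cm).
have yK0 := dotv_ge0 (- J *m invmx Cm).
have q1 := Q1 an0 Cnb N.
have q2 := Q1 am0 Cmb M0.
have q3 := Q1 am0 Cmb (- J).
have q4 := Q3 am0 Cmb (- J).
apply: (scal_lower an bn am h W (dotv (rl - rk) (rl - rk)) (dotv Z Z)
   (dotv (N *m invmx Cn) (N *m invmx Cn)) (dotv (M0 *m invmx Cm) (M0 *m invmx Cm))
   (dotv (- J *m invmx Cm) (- J *m invmx Cm)) (dotv N N) (Qf R Cn N) (Qf R Cm M0) (Qf R Cm (- J))) => //.
all: lra.
Qed.
End Edge.
Arguments edge_main {R an bn am bm h ie Cn Cm uk ul rk rl u r n m}.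
Lemma edge_facts {R : realType} {nN nE : nat} {pos : 'I_nN -> 'rV[R]_3} {ends : 'I_nE -> 'I_nN * 'I_nN} :
  graph_ok pos ends ->
  (forall e, (ends e).1 != (ends e).2) /\ (forall e, 0 < edge_len pos ends e) /\
  (forall e, dotv (edge_dir pos ends e) (edge_dir pos ends e) = 1).
Proof.
case=> pinj [einj [elt Hc]].
have Hne : forall e, (ends e).1 != (ends e).2.
  by move=> e; have := elt e; apply: contraTneq => ->; rewrite ltnn.
have dpos : forall e, 0 < dotv (pos (ends e).2 - pos (ends e).1) (pos (ends e).2 - pos (ends e).1).
  move=> e; rewrite lt_def dotv_ge0 andbT; apply/eqP => /dotv_eq0 /eqP.
  rewrite subr_eq0 => /eqP /pinj E; have := Hne e; by rewrite E eqxx.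
have hpos : forall e, 0 < edge_len pos ends e.
  by move=> e; rewrite /edge_len /normv sqrtr_gt0.
split => //; split => // e.
rewrite /edge_dir dotvZl dotvZr mulrA.
have := sqr_sqrtr (ltW (dpos e)); rewrite -/(normv _) -/(edge_len pos ends e) => E.
have hn := gt_eqF (hpos e).
rewrite -E; field.
by rewrite hn.
Qed.

Theorem theorem5p1 (R : realType) (an bn am bm : R) :
  0 < an -> 0 < bn -> 0 < am -> 0 < bm ->
  exists (h0 c : R -> R), (forall t, 0 < h0 t) /\
  forall (nN nE : nat) (pos : 'I_nN -> 'rV[R]_3) (ends : 'I_nE -> 'I_nN * 'I_nN)
         (ND : {set 'I_nN}) (Cn Cm : 'I_nE -> 'M[R]_3),
    graph_ok pos ends -> ND != finset.set0 ->
    (forall e, coef_ok an bn (edge_dir pos ends e) (Cn e)) ->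
    (forall e, coef_ok am bm (edge_dir pos ends e) (Cm e)) ->
    (forall e, edge_len pos ends e <= h0 (lam_min pos ends ND)^-1) ->
    forall lam phi : 'I_nN -> 'rV[R]_3, inV ND lam -> inV ND phi ->
    forall u r n m : 'I_nE -> R -> 'rV[R]_3,
    (forall e, local_sol (edge_len pos ends e) (edge_dir pos ends e) (Cn e) (Cm e)
                 (lam (ends e).1) (lam (ends e).2) (phi (ends e).1) (phi (ends e).2)
                 (u e) (r e) (n e) (m e)) ->
    let A := Aform ends ND (fun e => n e 0) (fun e => n e (edge_len pos ends e))
                           (fun e => m e 0) (fun e => m e (edge_len pos ends e)) lam phi in
    let LL := Lform pos ends lam lam + Lform pos ends phi phi in
    LL <= c (lam_min pos ends ND)^-1 * A /\ A <= c (lam_min pos ends ND)^-1 * LL.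
Proof.
move=> an0 bn0 am0 bm0.
have [c1 c1E] : exists c1 : R, c1 = 2 * bn + 4 * bm by eexists.
have [kap kapE] : exists kap : R, kap = (3 * am ^+ 2 + 11 * an * am + an * bn) / (an * am ^+ 2) by eexists.
have c10 : 0 <= c1 by rewrite c1E; lra.
have aam : 0 < an * am ^+ 2 by rewrite mulr_gt0 // exprn_gt0.
have kap0 : 0 <= kap.
  rewrite kapE divr_ge0 // ?ltW //.
  have := mulr_gt0 an0 bn0; have := mulr_gt0 an0 am0; have := exprn_gt0 2 am0.
  move=> *; nra.
exists (fun _ => 1), (fun t => (c1 + kap) * (2 + 4 * `|t|)).
split => [t|]; first exact: ltr01.
move=> nN nE pos ends ND Cn Cm Hg HND Hcn Hcm Hlen lam phi Hlam Hphi u r n m Hloc A LL.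
have [Hne [Hh Hu]] := edge_facts Hg.
have Hc : forall a b, connect (adj ends) a b by case: Hg => _ [_ [_ H]].
have [W HW] : exists W : 'I_nE -> R, forall e, W e =
   - (dotv (n e (edge_len pos ends e)) (lam (ends e).2) - dotv (n e 0) (lam (ends e).1)
      + dotv (m e (edge_len pos ends e)) (phi (ends e).2) - dotv (m e 0) (phi (ends e).1)).
  by eexists => e.
have EM : forall e,
  0 <= W e /\
  W e <= c1 * (dotv (lam (ends e).2 - lam (ends e).1) (lam (ends e).2 - lam (ends e).1) / edge_len pos ends e
              + dotv (phi (ends e).2 - phi (ends e).1) (phi (ends e).2 - phi (ends e).1) / edge_len pos ends e
              + edge_len pos ends e * dotv (phi (ends e).2) (phi (ends e).2)) /\
  dotv (lam (ends e).2 - lam (ends e).1) (lam (ends e).2 - lam (ends e).1) / edge_len pos ends e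
   + dotv (phi (ends e).2 - phi (ends e).1) (phi (ends e).2 - phi (ends e).1) / edge_len pos ends e
   <= 2 * kap * W e + 2 * (edge_len pos ends e * dotv (phi (ends e).2) (phi (ends e).2)) /\
  dotv (phi (ends e).2 - phi (ends e).1) (phi (ends e).2 - phi (ends e).1) / edge_len pos ends e <= kap * W e.
  move=> e.
  case: (Hcn e) => Cns [Cnb _]; case: (Hcm e) => Cms [Cmb _].
  have h1 : edge_len pos ends e <= 1 := Hlen e.
  have [W0 [Wup Wlo]] := edge_main an0 bn0 am0 bm0 (Hh e) h1 (Hu e) Cns Cnb Cms Cmb (Hloc e) (W e) (HW e).
  set h := edge_len pos ends e in W0 Wup Wlo *.
  set U := dotv (lam (ends e).2 - lam (ends e).1) _ in Wup Wlo *.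
  set D := dotv (phi (ends e).2 - phi (ends e).1) _ in Wup Wlo *.
  set Z := dotv (_ + _) _ in Wlo.
  have hp := Hh e; rewrite -/h in hp.
  rewrite -c1E in Wup.
  split => //.
  have Z0 : 0 <= Z by exact: dotv_ge0.
  have D0 : 0 <= D by exact: dotv_ge0.
  have UZ : U <= 2 * Z + 2 * (h ^+ 2 * dotv (phi (ends e).2) (phi (ends e).2)).
    have := sq_add (lam (ends e).2 - lam (ends e).1 + h *: crossv (edge_dir pos ends e) (phi (ends e).2))
                   (- (h *: crossv (edge_dir pos ends e) (phi (ends e).2))).
    rewrite addrK -/U -/Z !(dotvNl, dotvNr, dotvZl, dotvZr) opprK.
    have := cross_le (edge_dir pos ends e) (phi (ends e).2) (Hu e).
    have := sqr_ge0 h; rewrite expr2 => hh cr.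
    have := ler_wpM2l hh cr; lra.
  have DZ : (D + Z) / h <= kap * W e.
    rewrite ler_pdivrMr // kapE.
    have -> : (3 * am ^+ 2 + 11 * an * am + an * bn) / (an * am ^+ 2) * W e * h =
      h * W e * (3 * am ^+ 2 + 11 * an * am + an * bn) / (an * am ^+ 2).
      by field; rewrite !gt_eqF.
    by rewrite ler_pdivlMr // mulrC.
  split.
    have e1 : c1 * (U / h + D / h + h * dotv (phi (ends e).2) (phi (ends e).2)) =
      (c1 * (U + D + h ^+ 2 * dotv (phi (ends e).2) (phi (ends e).2))) / h.
      by field; rewrite gt_eqF.
    by rewrite e1 ler_pdivlMr // mulrC.
  have e2 : U / h <= 2 * (Z / h) + 2 * (h * dotv (phi (ends e).2) (phi (ends e).2)).
    have e3 : 2 * (Z / h) + 2 * (h * dotv (phi (ends e).2) (phi (ends e).2)) =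
       (2 * Z + 2 * (h ^+ 2 * dotv (phi (ends e).2) (phi (ends e).2))) / h by field; rewrite gt_eqF.
    by rewrite e3 ler_pdivrMr // divfK ?gt_eqF.
  have e4 : (D + Z) / h = D / h + Z / h by rewrite mulrDl.
  have DZ0 : 0 <= D / h by rewrite divr_ge0 // ltW.
  have ZZ0 : 0 <= Z / h by rewrite divr_ge0 // ltW.
  split; lra.
have EA : A = \sum_(e < nE) W e.
  rewrite /A (AformE ND _ _ _ _ lam phi Hlam Hphi); apply: eq_bigr => e _; by rewrite HW.
have ELL : LL = Lform pos ends lam lam + Lform pos ends phi phi by [].
clearbody A LL.
have EL1 := LformE (pos := pos) Hne lam.
have EL2 := LformE (pos := pos) Hne phi.
have EM2 := MformE (pos := pos) Hne phi.
have PO := poinc Hne Hh Hc HND phi Hphi.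
have L10 := L_ge0 (pos := pos) Hne Hh lam.
have L20 := L_ge0 (pos := pos) Hne Hh phi.
move: PO; set T := `| _ | => PO.
have T0 : 0 <= T by exact: normr_ge0.
have sW0 : 0 <= \sum_(e < nE) W e by apply: sumr_ge0 => e _; exact: (EM e).1.
have sH : \sum_(e < nE) edge_len pos ends e * dotv (phi (ends e).2) (phi (ends e).2) <= 2 * Mform pos ends phi phi.
  rewrite EM2 big_distrr; apply: ler_sum => e _ /=.
  have := mulr_ge0 (ltW (Hh e)) (dotv_ge0 (phi (ends e).1)); lra.
have sUp : \sum_(e < nE) W e <= c1 * (Lform pos ends lam lam + Lform pos ends phi phi +
    \sum_(e < nE) edge_len pos ends e * dotv (phi (ends e).2) (phi (ends e).2)).
  rewrite EL1 EL2 -!big_split big_distrr /=; apply: ler_sum => e _; exact: (EM e).2.1.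
have sLo : Lform pos ends lam lam + Lform pos ends phi phi <= 2 * kap * \sum_(e < nE) W e +
    2 * \sum_(e < nE) edge_len pos ends e * dotv (phi (ends e).2) (phi (ends e).2).
  rewrite EL1 EL2 -!big_split !big_distrr -big_split /=; apply: ler_sum => e _; exact: (EM e).2.2.1.
have sD : Lform pos ends phi phi <= kap * \sum_(e < nE) W e.
  rewrite EL2 big_distrr /=; apply: ler_sum => e _; exact: (EM e).2.2.2.
rewrite -EA in sW0 sUp sLo sD.
rewrite /= in PO.
rewrite /=.
have f1 := ge0M T0 (subge0 sD).
have f2 := ge0M c10 (subge0 sH).
have f3 := ge0M c10 (subge0 PO).
have f4 := ge0M (ge0M c10 T0) L10.
have f5 := ge0M c10 sW0.
have f6 := ge0M (ge0M c10 T0) sW0.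
have f7 := ge0M kap0 (addr_ge0 L10 L20).
have f8 := ge0M (ge0M kap0 T0) (addr_ge0 L10 L20).
have f9 := ge0M c10 (addr_ge0 L10 L20).
have f10 := ge0M (ge0M c10 T0) (addr_ge0 L10 L20).
rewrite ELL; split; lra.
Qed.
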